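(* Let $\mathcal{P}=\langle P,\le\rangle$ be a finite bounded poset with $|P|\ge 2$, bottom $\bot$, top $\top$, and height $H$. Define $R^{+}_{c}(a)=[\,H(\uparrow a)-1,\; H+H(\downarrow a)-2\,]$ for $a\in P$. Then: (i) for every $a\in P$ we have $H(\uparrow a)-1\le H+H(\downarrow a)-2$, so $R^{+}_{c}(a)$ is an interval with nonnegative integer endpoints; moreover, writing $R^{+}_{c}(a)=[r_*(a),r^*(a)]$, the map $r_*$ is strictly antitone and $r^*$ is strictly isotone (i.e. $a<b$ implies $r_*(a)>r_*(b)$ and $r^*(a)<r^*(b)$), and consequently $a<b$ implies $R^{+}_{c}(a)\subsetneq R^{+}_{c}(b)$; that is, $R^{+}_{c}$ is a strict interval rank function for the subset order $\subseteq$; (ii) $R^{+}_{c}(\top)=[0,2(H-1)]$ and $R^{+}_{c}(\bot)=[H-1,H-1]$; (iii) if $R:P\to\overline{\mathbb{N}}$, $R(a)=[r_*(a),r^*(a)]$, is any strict interval rank function for $\subseteq$ (i.e. $a<b$ implies $R(a)\subsetneq R(b)$, and $r_*$ is strictly antitone and $r^*$ strictly isotone) such that $0\le r_*(a)\le r^*(a)\le 2(H-1)$ for all $a\in P$, then for every $a\in P$ we have $R(a)\ge_W R^{+}_{c}(a)$, i.e. $r_*(a)\ge H(\uparrow a)-1$ and $r^*(a)\ge H+H(\downarrow a)-2$.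
   Context: A poset is bounded if it has a least element $\bot$ and a greatest element $\top$. The height $H(\mathcal{Q})$ of a finite poset is the number of elements of its largest chain; $H=H(\mathcal{P})$. For $a\in P$, $\uparrow a=\{b\in P: b\ge a\}$ and $\downarrow a=\{b\in P:b\le a\}$, viewed as subposets; $H(\uparrow a)$, $H(\downarrow a)$ are their heights. $\overline{\mathbb{N}}$ denotes the set of intervals $[x_*,x^*]$ with integers $0\le x_*\le x^*$. The subset order on intervals: $[x_*,x^*]\subseteq[y_*,y^*]$ iff $x_*\ge y_*$ and $x^*\le y^*$. The weak order: $[x_*,x^*]\le_W[y_*,y^*]$ iff $x_*\le y_*$ and $x^*\le y^*$; $\ge_W$ is its dual. *)

(* Defs.v *)
From mathcomp Require Import all_boot all_order.
Set Implicit Arguments. Unset Strict Implicit. Unset Printing Implicit Defensive.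
Import Order.Theory.
Local Open Scope order_scope.

Section Defs.
Context {d : Order.disp_t} {T : finPOrderType d}.

Definition chainb (C : {set T}) : bool :=
  [forall x in C, forall y in C, x >=< y].

Definition height_of (A : {set T}) : nat :=
  \max_(C : {set T} | (C \subset A) && chainb C) #|C|.

Definition upset (a : T) : {set T} := [set b | a <= b].
Definition downset (a : T) : {set T} := [set b | b <= a].

Definition height : nat := height_of [set: T].

(* intervals [x_lo, x_hi] of naturals, encoded as pairs (x_lo, x_hi) *)
Definition is_interval (x : nat * nat) : Prop := (x.1 <= x.2)%N .

Definition isub (x y : nat * nat) : bool := (y.1 <= x.1)%N && (x.2 <= y.2)%N .
Definition isubset_strict (x y : nat * nat) : bool := isub x y && (x != y).

Definition weak_le (x y : nat * nat) : bool := (x.1 <= y.1)%N && (x.2 <= y.2)%N .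

Definition strict_interval_rank (R : T -> nat * nat) : Prop :=
  (forall a, is_interval (R a)) /\
  (forall a b : T, a < b ->
     [/\ ((R b).1 < (R a).1)%N, ((R a).2 < (R b).2)%N
       & isubset_strict (R a) (R b)]).

Definition Rc (a : T) : nat * nat :=
  ((height_of (upset a)).-1, height + height_of (downset a) - 2).

End Defs.

(* Main.v *)
Require Import Defs.
From mathcomp Require Import all_boot all_order.
From mathcomp Require Import zify.
Import Order.Theory.
Local Open Scope order_scope.
Set Implicit Arguments. Unset Strict Implicit.

Section Aux.
Context {d : Order.disp_t} {T : finPOrderType d}.

Lemma chainP (C : {set T}) c c' : chainb C -> c \in C -> c' \in C -> c >=< c'.
Proof. by move=> /forall_inP H cC c'C; move/forall_inP: (H c cC); apply. Qed.

Lemma chain_sub (C D : {set T}) : C \subset D -> chainb D -> chainb C.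
Proof.
move=> sCD hD; apply/forall_inP=> x xC; apply/forall_inP=> y yC.
exact: (chainP hD (subsetP sCD _ xC) (subsetP sCD _ yC)).
Qed.

Lemma chain1 (a : T) : chainb [set a].
Proof.
rewrite /chainb; apply/forall_inP=> x; rewrite inE => /eqP ->.
by apply/forall_inP=> y; rewrite inE => /eqP ->; rewrite comparablexx.
Qed.

Lemma chainU1 (a : T) C : chainb C -> (forall c, c \in C -> a >=< c) -> chainb (a |: C).
Proof.
move=> hC ha; rewrite /chainb; apply/forall_inP=> x; rewrite in_setU1 => /orP[/eqP->|xC];
  apply/forall_inP=> y; rewrite in_setU1 => /orP[/eqP->|yC]; rewrite ?comparablexx //.
- exact: ha.
- by rewrite comparable_sym; apply: ha.
- exact: (chainP hC).
Qed.

Lemma height_ge (A C : {set T}) : C \subset A -> chainb C -> (#|C| <= height_of A)%N.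
Proof.
by move=> sCA hC; rewrite /height_of; apply: (leq_bigmax_cond C); rewrite sCA hC.
Qed.

Lemma height_ex (A : {set T}) :
  exists C : {set T}, [/\ C \subset A, chainb C & #|C| = height_of A].
Proof.
have hp : (0 < #|[pred C : {set T} | (C \subset A) && chainb C]|)%N.
  apply/card_gt0P; exists set0; rewrite inE sub0set /=.
  by apply/forall_inP=> x; rewrite inE.
have [C HC Heq] := eq_bigmax_cond (fun C : {set T} => #|C|) hp.
move: HC; rewrite inE => /andP[h1 h2]; exists C; split => //.
Qed.

Lemma height_sub (A B : {set T}) : A \subset B -> (height_of A <= height_of B)%N.
Proof.
move=> sAB; have [C [sCA hC <-]] := height_ex A.
by apply: height_ge => //; apply: subset_trans sAB.
Qed.

Lemma height_pos (A : {set T}) a : a \in A -> (1 <= height_of A)%N.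
Proof.
move=> aA; have := height_ge (C:=[set a]) (A:=A); rewrite cards1; apply.
  by rewrite sub1set. exact: chain1.
Qed.

Lemma argmax_chain (C : {set T}) (f : T -> nat) m0 : m0 \in C ->
  exists2 m, m \in C & forall c, c \in C -> (f c <= f m)%N.
Proof.
move=> m0C; case: (arg_maxnP f m0C) => m mC mmax; exists m => //.
Qed.

Lemma chain_iso (f : T -> nat) (hf : forall u v : T, u < v -> (f u < f v)%N) :
  forall n (C : {set T}) a x, #|C| = n -> chainb C -> x <= a ->
  (forall c, c \in C -> x <= c /\ c < a) -> (f x + #|C| <= f a)%N.
Proof.
elim=> [|n IH] C a x hn hC hxa hCc.
  rewrite hn addn0; case: (eqVneq x a) => [->//|nxa].
  by apply: ltnW; apply: hf; rewrite lt_neqAle nxa hxa.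
have [m0 m0C] : exists m0, m0 \in C.
  by apply/set0Pn; rewrite -card_gt0 hn.
have [m mC mmax] := argmax_chain f m0C.
have cm : forall c, c \in C -> c <= m.
  move=> c cC; case: (comparable_leP (chainP hC cC mC)) => // mc.
  by have := mmax c cC; have := hf _ _ mc; lia.
have hC' : #|C :\ m| = n by move: hn; rewrite (cardsD1 m) mC; lia.
have := IH (C :\ m) m x hC' (chain_sub (subD1set C m) hC) (proj1 (hCc m mC)).
have -> : (#|C| = #|C :\ m| + 1)%N by rewrite (cardsD1 m) mC addnC.
have := hf _ _ (proj2 (hCc m mC)).
move=> h1 h2; suff : (f x + #|C :\ m| <= f m)%N by lia.
apply: h2 => c; rewrite !inE => /andP[cm' cC]; split; first exact: (proj1 (hCc c cC)).
by rewrite lt_neqAle cm' cm.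
Qed.

Lemma chain_anti (f : T -> nat) (hf : forall u v : T, u < v -> (f v < f u)%N) :
  forall n (C : {set T}) a x, #|C| = n -> chainb C -> a <= x ->
  (forall c, c \in C -> c <= x /\ a < c) -> (f x + #|C| <= f a)%N.
Proof.
elim=> [|n IH] C a x hn hC hxa hCc.
  rewrite hn addn0; case: (eqVneq a x) => [->//|nxa].
  by apply: ltnW; apply: hf; rewrite lt_neqAle nxa hxa.
have [m0 m0C] : exists m0, m0 \in C.
  by apply/set0Pn; rewrite -card_gt0 hn.
have [m mC mmax] := argmax_chain f m0C.
have cm : forall c, c \in C -> m <= c.
  move=> c cC; case: (comparable_leP (chainP hC mC cC)) => // mc.
  by have := mmax c cC; have := hf _ _ mc; lia.
have hC' : #|C :\ m| = n by move: hn; rewrite (cardsD1 m) mC; lia.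
have := IH (C :\ m) m x hC' (chain_sub (subD1set C m) hC) (proj1 (hCc m mC)).
have -> : (#|C| = #|C :\ m| + 1)%N by rewrite (cardsD1 m) mC addnC.
have := hf _ _ (proj2 (hCc m mC)).
move=> h1 h2; suff : (f x + #|C :\ m| <= f m)%N by lia.
apply: h2 => c; rewrite !inE => /andP[cm' cC]; split; first exact: (proj1 (hCc c cC)).
by rewrite lt_neqAle eq_sym cm' cm.
Qed.

Lemma up_lt (a b : T) : a < b -> (height_of (upset b) < height_of (upset a))%N.
Proof.
move=> ab; have [C [sC hC <-]] := height_ex (upset b).
have aC : a \notin C.
  apply/negP=> /(subsetP sC); rewrite inE => ba.
  by rewrite (lt_geF ab) in ba.
have := height_ge (A:=upset a) (C:=a |: C); rewrite cardsU1 aC add1n; apply.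
  rewrite subUset sub1set inE lexx /=; apply/subsetP=> c /(subsetP sC).
  by rewrite !inE => bc; apply: le_trans bc; rewrite ltW.
apply: chainU1 => // c /(subsetP sC); rewrite inE => bc.
by apply: le_comparable; apply: le_trans bc; rewrite ltW.
Qed.

Lemma down_lt (a b : T) : a < b -> (height_of (downset a) < height_of (downset b))%N.
Proof.
move=> ab; have [C [sC hC <-]] := height_ex (downset a).
have bC : b \notin C.
  apply/negP=> /(subsetP sC); rewrite inE => ba.
  by rewrite (lt_geF ab) in ba.
have := height_ge (A:=downset b) (C:=b |: C); rewrite cardsU1 bC add1n; apply.
  rewrite subUset sub1set inE lexx /=; apply/subsetP=> c /(subsetP sC).
  by rewrite !inE => bc; apply: le_trans bc _; rewrite ltW.
apply: chainU1 => // c /(subsetP sC); rewrite inE => bc.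
by rewrite comparable_sym; apply: le_comparable; apply: le_trans bc _; rewrite ltW.
Qed.

End Aux.

Theorem proposition3 (d : Order.disp_t) (T : finTBPOrderType d)
    (hT : (1 < #|T|)%N) :
  (* (i) *)
  ((forall a : T, ((height_of (upset a)).-1 <= @height d T + height_of (downset a) - 2)%N)
   /\ (forall a b : T, a < b -> ((Rc b).1 < (Rc a).1)%N /\ ((Rc a).2 < (Rc b).2)%N)
   /\ (forall a b : T, a < b -> isubset_strict (Rc a) (Rc b))
   /\ strict_interval_rank (@Rc d T))
  (* (ii) *)
  /\ (Rc (\top : T) = (0%N, (2 * (@height d T).-1)%N)
      /\ Rc (\bot : T) = ((@height d T).-1, (@height d T).-1))
  (* (iii) *)
  /\ (forall R : T -> nat * nat,
        strict_interval_rank R ->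
        (forall a, ((R a).2 <= 2 * (@height d T).-1)%N) ->
        forall a, weak_le (Rc a) (R a)).
Proof.
have uH : forall a : T, (height_of (upset a) <= @height d T)%N.
  by move=> a; rewrite /height; apply: height_sub; apply: subsetT.
have u1 : forall a : T, (1 <= height_of (upset a))%N.
  by move=> a; apply: (height_pos (a:=a)); rewrite inE.
have w1 : forall a : T, (1 <= height_of (downset a))%N.
  by move=> a; apply: (height_pos (a:=a)); rewrite inE.
have H1 : (1 <= @height d T)%N by apply: (height_pos (a:=\bot)).
have Pi : forall a : T, ((height_of (upset a)).-1 <= @height d T + height_of (downset a) - 2)%N.
  by move=> a; have := uH a; have := w1 a; lia.
have Pm : forall a b : T, a < b -> ((Rc b).1 < (Rc a).1)%N /\ ((Rc a).2 < (Rc b).2)%N.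
  move=> a b ab; rewrite /Rc /=; have := up_lt ab; have := down_lt ab.
  have := u1 b; have := w1 a; lia.
have Ps : forall a b : T, a < b -> isubset_strict (Rc a) (Rc b).
  move=> a b ab; have [h1 h2] := Pm a b ab; rewrite /isubset_strict /isub.
  rewrite (ltnW h1) (ltnW h2) /=; apply/eqP=> e; move: h2; rewrite e; lia.
have upbot : upset (\bot : T) = setT by apply/setP=> x; rewrite !inE le0x.
have downtop : downset (\top : T) = setT by apply/setP=> x; rewrite !inE lex1.
split; first (split=> //; split=> //; split=> //; split=> // a b ab).
  by have [h1 h2] := Pm a b ab; split=> //; apply: Ps.
split; first split.
  rewrite /Rc; have -> : upset (\top : T) = [set \top] by apply/setP=> x; rewrite !inE eq_le lex1.
  have h1 : height_of [set (\top : T)] = 1%N.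
    apply/eqP; rewrite eqn_leq (height_pos (a:=\top)) ?inE // andbT.
    by have [C [sC _ <-]] := height_ex [set (\top : T)]; rewrite -(cards1 (\top : T)) subset_leq_card.
  rewrite h1 downtop; move: H1; rewrite /height => H1'; congr pair; lia.
  rewrite /Rc; have -> : downset (\bot : T) = [set \bot] by apply/setP=> x; rewrite !inE eq_le le0x andbT.
  have h1 : height_of [set (\bot : T)] = 1%N.
    apply/eqP; rewrite eqn_leq (height_pos (a:=\bot)) ?inE // andbT.
    by have [C [sC _ <-]] := height_ex [set (\bot : T)]; rewrite -(cards1 (\bot : T)) subset_leq_card.
  rewrite h1 upbot; move: H1; rewrite /height => H1'; congr pair; lia.
move=> R [Rint Rm] _.
have lo : forall a : T, ((height_of (upset a)).-1 <= (R a).1)%N.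
  move=> a; have [C [sC hC <-]] := height_ex (upset a).
  have hf : forall u v : T, u < v -> ((R v).1 < (R u).1)%N.
    by move=> u v uv; case: (Rm u v uv).
  have hCc : forall c, c \in C :\ a -> c <= \top /\ a < c.
    move=> c; rewrite !inE => /andP[ca cC]; split; first exact: lex1.
    by move: (subsetP sC c cC); rewrite inE => ac; rewrite lt_neqAle eq_sym ca ac.
  have h := @chain_anti d T (fun x => (R x).1) hf _ (C :\ a) a \top (erefl _)
       (chain_sub (subD1set C a) hC) (lex1 a) hCc.
  have := cardsD1 a C; move: h => /=; case: (a \in C) => /= h1 h2; rewrite h2 ?add1n ?add0n /=.
    exact: leq_trans (leq_addl _ _) h1.
  apply: leq_trans (leq_pred _) _; exact: leq_trans (leq_addl _ _) h1.
move=> a; rewrite /weak_le /Rc /= lo /=.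
have [C [sC hC <-]] := height_ex (downset a).
have hf : forall u v : T, u < v -> ((R u).2 < (R v).2)%N.
  by move=> u v uv; case: (Rm u v uv).
have hCc : forall c, c \in C :\ a -> \bot <= c /\ c < a.
  move=> c; rewrite !inE => /andP[ca cC]; split; first exact: le0x.
  by move: (subsetP sC c cC); rewrite inE => ac; rewrite lt_neqAle ca ac.
have h := @chain_iso d T (fun x => (R x).2) hf _ (C :\ a) a \bot (erefl _)
     (chain_sub (subD1set C a) hC) (le0x a) hCc.
have hb : ((@height d T).-1 <= (R \bot).2)%N.
  have := lo \bot; rewrite upbot => h2; apply: leq_trans h2 _; exact: Rint.
move: hb H1; rewrite /height => hb H1'.
have := cardsD1 a C; move: h => /=; case: (a \in C) => /=; lia.
Qed.
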